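(* Any Single-Source DSO must take $\Omega(\min\{M^{1/2}n^{3/2},\, n^2\})$ bits of space on at least one undirected graph with $O(n)$ vertices and integer edge weights in the range $[1,M]$.
   Context: For an undirected edge-weighted graph $G$, a source $s$, a target $t$ and an edge $e$, $d(s,t,e)$ is the length of a shortest $s$-$t$ path in $G-e$ ($\infty$ if none). A Single-Source Distance Sensitivity Oracle (DSO) with source $s$ is a data structure (depending on $G$ and $s$) that answers every query $(t,e)$ by returning $d(s,t,e)$. *)

(* Defs.v *)
From mathcomp Require Import all_boot.
From Stdlib Require Reals.

Set Implicit Arguments.
Unset Strict Implicit.
Unset Printing Implicit Defensive.

(* An edge-weighted graph on vertex set 'I_N: w (x,y) is the weight of the
   edge {x,y}, 0 meaning "no edge". *)
Definition wgraph (N : nat) := {ffun 'I_N * 'I_N -> nat}.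

Definition valid_graph (N M : nat) (G : wgraph N) : Prop :=
  (forall x y, G (x, y) = G (y, x)) /\
  (forall x, G (x, x) = 0) /\
  (forall x y, 0 < G (x, y) -> G (x, y) <= M).

Definition is_edge N (G : wgraph N) (e : 'I_N * 'I_N) : bool := 0 < G e.

(* adjacency in G - e, where e = (u,v) denotes the undirected edge {u,v} *)
Definition adj_minus N (G : wgraph N) (e : 'I_N * 'I_N) : rel 'I_N :=
  fun x y => (0 < G (x, y)) && ~~ ((x, y) == e) && ~~ ((y, x) == e).

(* a walk s = x0, x1, ..., xk = t, given as s and p = [x1; ...; xk] *)
Definition is_walk N (G : wgraph N) e (s t : 'I_N) (p : seq 'I_N) : bool :=
  path (adj_minus G e) s p && (last s p == t).

Definition walk_weight N (G : wgraph N) (s : 'I_N) (p : seq 'I_N) : nat :=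
  \sum_(xy <- zip (s :: p) p) G xy.

(* d = d(s,t,e): length of a shortest s-t path in G - e, None = infinity *)
Definition is_dist N (G : wgraph N) e (s t : 'I_N) (d : option nat) : Prop :=
  match d with
  | Some k => (exists p, is_walk G e s t p /\ walk_weight G s p = k) /\
              (forall p, is_walk G e s t p -> k <= walk_weight G s p)
  | None => forall p, ~ is_walk G e s t p
  end.

(* A single-source DSO on N-vertex graphs with weights in [1,M]:
   a preprocessing map enc producing a bit string from (G, s), together with
   a query procedure that, from the bit string alone, answers every query
   (t, e) with d(s,t,e). *)
Definition is_SSDSO (N M : nat)
  (enc : wgraph N -> 'I_N -> seq bool)
  (query : seq bool -> 'I_N -> 'I_N * 'I_N -> option nat) : Prop :=
  forall (G : wgraph N) (s : 'I_N), valid_graph M G ->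
    forall (t : 'I_N) (e : 'I_N * 'I_N), is_edge G e ->
      is_dist G e s t (query (enc G s) t e).

Definition lb_fun (n M : nat) : Reals.Rdefinitions.R :=
  Reals.Rbasic_fun.Rmin
    (Reals.Rdefinitions.Rmult (Reals.R_sqrt.sqrt (Reals.Raxioms.INR M))
       (Reals.Rdefinitions.Rmult (Reals.Raxioms.INR n) (Reals.R_sqrt.sqrt (Reals.Raxioms.INR n))))
    (Reals.Rdefinitions.Rmult (Reals.Raxioms.INR n) (Reals.Raxioms.INR n)).

(* Main.v *)
Require Import Defs.
From mathcomp Require Import all_boot.
From Stdlib Require Import Reals.
From Stdlib Require Import Lra.
From mathcomp Require Import zify.

Set Implicit Arguments.
Unset Strict Implicit.
Unset Printing Implicit Defensive.

Module G.


Lemma zip_rcons_walk (T : Type) (s : T) p y :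
  zip (s :: rcons p y) (rcons p y) = rcons (zip (s :: p) p) (last s p, y).
Proof. by elim: p s => [|a p IH] s //=; rewrite IH. Qed.

Definition reach N (G : wgraph N) e s x d :=
  exists p, is_walk G e s x p /\ walk_weight G s p = d.

Lemma reach0 N (G : wgraph N) e s : reach G e s s 0.
Proof. exists [::]; by rewrite /is_walk /walk_weight /= big_nil eqxx. Qed.

Lemma reach_step N (G : wgraph N) e s x y d :
  reach G e s x d -> adj_minus G e x y -> reach G e s y (d + G (x, y)).
Proof.
move=> [p [/andP [Hp /eqP Hl] Hw]] Hxy; exists (rcons p y); split.
  by rewrite /is_walk rcons_path Hp Hl Hxy last_rcons eqxx.
by rewrite /walk_weight zip_rcons_walk big_rcons /= -Hw Hl.
Qed.

Lemma potential N (G : wgraph N) e (phi : 'I_N -> nat) s t p :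
  (forall x y, adj_minus G e x y -> phi y <= phi x + G (x, y)) ->
  is_walk G e s t p -> phi t <= phi s + walk_weight G s p.
Proof.
move=> Hphi; elim: p s => [|a p IH] s.
  by rewrite /is_walk /walk_weight /= => /eqP ->; rewrite big_nil addn0.
rewrite /is_walk /walk_weight /= big_cons => /andP [/andP [Hsa Hp] Hl].
have := IH a; rewrite /is_walk /walk_weight Hp Hl => /(_ isT) H1.
have := Hphi _ _ Hsa; lia.
Qed.

Section Constr.
Variables (k n M : nat).
Definition hh := (2 * k) %/ M.
Definition cc (m : nat) := (2 * k - 2 * m) %/ M.
Definition aa (m : nat) := (2 * k - 2 * m) %% M + 1.
Definition V := (('I_k.+1 + ('I_k * 'I_hh.+1)) + 'I_n)%type.

Definition h0 (X : {ffun 'I_k * 'I_n -> bool}) (x y : V) : nat :=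
  match x, y with
  | inl (inl a), inl (inl b) => if (b == a.+1 :> nat) then 1 else 0
  | inl (inl a), inl (inr (m, o)) =>
      if (a == m :> nat) && (o == hh - cc m :> nat) then aa m else 0
  | inl (inr (m, o)), inl (inr (m', o')) =>
      if (m == m' :> nat) && (o' == o.+1 :> nat) && (hh - cc m <= o) then M else 0
  | inl (inr (m, o)), inr j => if (o == hh :> nat) && X (m, j) then 1 else 0
  | _, _ => 0
  end.

Definition NN := #|{: V}|.
Definition gr X : wgraph NN :=
  [ffun xy : 'I_NN * 'I_NN =>
     maxn (h0 X (enum_val xy.1) (enum_val xy.2)) (h0 X (enum_val xy.2) (enum_val xy.1))].

Lemma grE X (a b : V) : gr X (enum_rank a, enum_rank b) = maxn (h0 X a b) (h0 X b a).
Proof. by rewrite /gr ffunE /= !enum_rankK. Qed.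

Lemma cc_le m : cc m <= hh.
Proof. by apply: leq_div2r; lia. Qed.

Lemma ccaa m : m < k -> cc m * M + aa m = 2 * k - 2 * m + 1.
Proof. by move=> _; rewrite /cc /aa addnA -divn_eq. Qed.

Lemma aa_le m : 0 < M -> aa m <= M.
Proof. by move=> HM; rewrite /aa addn1 ltn_pmod. Qed.

Lemma h0_le X x y : 0 < M -> h0 X x y <= M.
Proof.
move=> HM; case: x => [[a|[m o]]|j]; case: y => [[b|[m' o']]|j'] //=;
  repeat case: ifP => //; rewrite ?aa_le //.
Qed.

Lemma h0_loop X x : h0 X x x = 0.
Proof.
case: x => [[a|[m o]]|j] //=; repeat case: ifP => //; move=> *; lia.
Qed.

Lemma valid_gr X : 0 < M -> valid_graph M (gr X).
Proof.
move=> HM; split; [|split].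
- by move=> x y; rewrite /gr !ffunE /= maxnC.
- by move=> x; rewrite /gr ffunE /= h0_loop.
- move=> x y _; rewrite /gr ffunE /= geq_max !h0_le //.
Qed.

End Constr.

End G.
Import G.

Module G2.


Section Sep.
Variables (k n M : nat) (HM : 0 < M).
Variables (i : 'I_k) (j : 'I_n).
Local Notation V := (V k n M).
Local Notation hh := (hh k M).
Local Notation cc := (cc k M).
Local Notation aa := (aa k M).
Local Notation gr := (@gr k n M).
Local Notation h0 := (@h0 k n M).
Definition vv m : V := inl (inl (inord m)).
Definition tt (m : 'I_k) o : V := inl (inr (m, inord o)).
Definition bb (j : 'I_n) : V := inr j.
Definition ecut := (enum_rank (vv i), enum_rank (vv i.+1)).

Lemma pair_rank (a b c d : V) :
  ((enum_rank a, enum_rank b) == (enum_rank c, enum_rank d)) = (a == c) && (b == d).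
Proof. by rewrite xpair_eqE !(inj_eq enum_rank_inj). Qed.

Definition code (a : V) : nat := match a with inl (inl x) => val x | _ => k.+4 end.

Lemma codeE a m : m <= k -> (a == vv m) = (code a == m).
Proof.
move=> Hm; apply/eqP/eqP => [/(congr1 code)|E].
  by rewrite /code /vv /= inordK.
move: E; case: a => [[x|y]|y] /= E; try lia.
by rewrite /vv -E inord_val.
Qed.

Lemma adjE X (a b : V) : adj_minus (gr X) ecut (enum_rank a) (enum_rank b) =
  (0 < maxn (h0 X a b) (h0 X b a)) && ~~ ((code a == i) && (code b == i.+1))
    && ~~ ((code b == i) && (code a == i.+1)).
Proof.
have ltik := ltn_ord i.
by rewrite /adj_minus grE /ecut !pair_rank !codeE //; lia.
Qed.

Lemma vvK m : m <= k -> (inord m : 'I_k.+1) = m :> nat.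
Proof. by move=> H; rewrite inordK. Qed.

Lemma vv_inj m m' : m <= k -> m' <= k -> (vv m == vv m') = (m == m').
Proof.
move=> H1 H2; apply/eqP/eqP => [E|->//].
have := congr1 (fun v : V => match v with inl (inl a) => val a | _ => 0 end) E.
by rewrite /vv /= !inordK.
Qed.

Lemma reach_step' N (G : wgraph N) e s x y d d' :
  reach G e s x d -> adj_minus G e x y -> d' = d + G (x, y) -> reach G e s y d'.
Proof. by move=> H1 H2 ->; apply: reach_step. Qed.

Ltac simp := rewrite /G.h0 /vv /tt /bb /= ?inordK ?eqxx /=; try lia;
  repeat (case: ifP => /=; rewrite ?inordK; try lia; move=> ?); try lia.

Lemma walkX (X : {ffun 'I_k * 'I_n -> bool}) : X (i, j) = true ->
  reach (gr X) ecut (enum_rank (vv 0)) (enum_rank (bb j)) (2 * k - i + 2).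
Proof.
move=> Hx.
have ltik := ltn_ord i.
have hc := cc_le k M i.
have E := ccaa M ltik.
have aap : 0 < aa i by rewrite /G.aa addn1.
have Hv : forall m, m <= i -> reach (gr X) ecut (enum_rank (vv 0)) (enum_rank (vv m)) m.
  elim=> [|m IH] Hm; first exact: reach0.
  apply: (reach_step' (IH (ltnW Hm))); rewrite ?adjE ?grE ?vv_inj; try lia; simp.
have Ht : forall o, o <= cc i -> reach (gr X) ecut (enum_rank (vv 0))
     (enum_rank (tt i (hh - cc i + o))) (i + aa i + o * M).
  elim=> [|o IH] Ho.
    apply: (reach_step' (Hv i (leqnn _))); rewrite ?adjE ?grE ?vv_inj; try lia; simp.
  apply: (reach_step' (IH (ltnW Ho))); rewrite ?adjE ?grE ?vv_inj; try lia; simp.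
apply: (reach_step' (Ht _ (leqnn _))); rewrite ?adjE ?grE ?vv_inj; try lia; simp.
Qed.


Definition TT := 2 * k - i + 3.
Definition psi0 (v : V) : nat :=
  match v with
  | inl (inl a) => if a <= i then val a else TT
  | inl (inr (m, o)) => if (m <= i) && (hh - cc m <= o)
                        then m + aa m + (o - (hh - cc m)) * M else TT
  | inr j' => if j' == j then TT else TT.-1
  end.
Definition phi (v : V) := minn (psi0 v) TT.

Lemma pot_edge (Y : {ffun 'I_k * 'I_n -> bool}) : Y (i, j) = false -> forall x y,
  0 < h0 Y x y -> ~~ ((code x == i) && (code y == i.+1)) ->
  ~~ ((code y == i) && (code x == i.+1)) ->
  phi x <= phi y + h0 Y x y /\ phi y <= phi x + h0 Y x y.
Proof.
move=> HY x y.
have ltik := ltn_ord i.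
have E : forall m, m < k -> cc m * M + aa m = 2 * k - 2 * m + 1 by move=> m; apply: ccaa.
have hc : forall m, cc m <= hh by move=> m; apply: cc_le.
have aap : forall m, 0 < aa m by move=> m; rewrite /G.aa addn1.
rewrite /phi /TT.
case: x => [[a|[m o]]|j1]; case: y => [[b|[m' o']]|j2] //=.
- have := ltn_ord a; have := ltn_ord b.
  rewrite /TT; repeat (case: ifP => ?); lia.
- have := ltn_ord a; have := ltn_ord m'; have := E m' (ltn_ord m'); have := hc m'; have := aap m'.
  rewrite /TT; repeat (case: ifP => ?); lia.
- have := ltn_ord m; have := ltn_ord m'; have := E m' (ltn_ord m'); have := hc m'; have := aap m'.
  case: (eqVneq m m') => [<-|ne]; last first.
    have/negbTE -> : (val m != val m') by [].
    by [].
  move: (nat_of_ord o') (ltn_ord o') => o2 Ho2.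
  rewrite eqxx /=; case: eqP => [->|_]; last by rewrite ?andbF.
  have := ltn_ord o.
  have F : hh - cc m <= o -> (o.+1 - (hh - cc m)) * M = (o - (hh - cc m)) * M + M.
    by move=> ?; rewrite subSn // mulSn addnC.
  case Hb: (hh - cc m <= o); last by rewrite andbF.
  rewrite F // /TT /=; repeat (case: ifP => ? /=); lia.
- have := E m (ltn_ord m); have := aap m; have := hc m.
  case Ho: (o == hh :> nat); last by [].
  case Hy: (Y (m, j2)); last by [].
  move/eqP: Ho => ->; rewrite leq_subr subKn ?hc //= => h1 h2 h3 _ _ _.
  case: (eqVneq j2 j) => [Ej|ne].
    have : val m != val i.
      by apply/negP => /eqP /val_inj Em; move: Hy; rewrite Em Ej HY.
    rewrite /TT; repeat (case: ifP => ? /=); lia.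
  rewrite /TT; repeat (case: ifP => ? /=); lia.
Qed.


Lemma lowY (Y : {ffun 'I_k * 'I_n -> bool}) : Y (i, j) = false -> forall p,
  is_walk (gr Y) ecut (enum_rank (vv 0)) (enum_rank (bb j)) p ->
  2 * k - i + 3 <= walk_weight (gr Y) (enum_rank (vv 0)) p.
Proof.
move=> HY p Hp.
have := potential (phi := fun x : 'I_(NN k n M) => phi (enum_val x)) _ Hp.
have P0 : phi (vv 0) = 0.
  rewrite /phi /psi0 /vv /= (@inordK k 0) //.
  rewrite leq0n; exact: min0n.
have e1 : enum_val (enum_rank (vv 0)) = vv 0 := enum_rankK _.
have e2 : enum_val (enum_rank (bb j)) = bb j := enum_rankK _.
have PT : phi (bb j) = TT by rewrite /phi /psi0 /bb /= eqxx minnn.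
rewrite e1 e2 P0 PT add0n => H.
apply: H.
move=> x y.
have [a ->] : exists a : V, x = enum_rank a by exists (enum_val x); rewrite enum_valK.
have [b ->] : exists b : V, y = enum_rank b by exists (enum_val y); rewrite enum_valK.
rewrite adjE /G.gr ffunE /=.
have -> : enum_val (enum_rank a) = a := enum_rankK _.
have -> : enum_val (enum_rank b) = b := enum_rankK _.
move=> /andP [/andP [Hpos H1] H2].
case: (posnP (h0 Y a b)) => Hab.
  have Hba : 0 < h0 Y b a by move: Hpos; rewrite Hab max0n.
  have [H3 _] := pot_edge HY Hba H2 H1.
  by apply: leq_trans H3 _; rewrite leq_add2l leq_maxr.
have [_ H3] := pot_edge HY Hab H1 H2.
by apply: leq_trans H3 _; rewrite leq_add2l leq_maxl.
Qed.

Lemma cut_edge X : is_edge (gr X) ecut.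
Proof.
have ltik := ltn_ord i.
rewrite /is_edge /ecut grE /G.h0 /vv !inordK //; try lia.
rewrite eqxx; exact: leq_trans (isT : 0 < 1) (leq_maxl _ _).
Qed.

Lemma sep enc query : is_SSDSO M enc query -> forall X Y : {ffun 'I_k * 'I_n -> bool},
  X (i, j) = true -> Y (i, j) = false ->
  enc (gr X) (enum_rank (vv 0)) <> enc (gr Y) (enum_rank (vv 0)).
Proof.
move=> HQ X Y HX HY Eenc.
have DX := HQ (gr X) (enum_rank (vv 0)) (valid_gr X HM) (enum_rank (bb j)) ecut (cut_edge X).
have DY := HQ (gr Y) (enum_rank (vv 0)) (valid_gr Y HM) (enum_rank (bb j)) ecut (cut_edge Y).
rewrite -Eenc in DY.
have [p [Wp Hw]] := walkX HX.
move: DX DY; case: (query _ _ _) => [d|] /=; last by move=> /(_ p Wp).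
move=> [_ Hle] [[q [Wq Hq]] _].
have := Hle p Wp; have := lowY HY Wq; rewrite Hq Hw; lia.
Qed.

End Sep.

End G2.
Import G2.


Definition code (s : seq bool) : nat := foldr (fun (b : bool) (acc : nat) => acc.*2 + nat_of_bool b) 1 s.

Lemma code_pos s : 0 < code s.
Proof. elim: s => //= b s IH; lia. Qed.

Lemma code_lt s : code s < expn 2 (size s).+1.
Proof. elim: s => [|b s IH] //=; rewrite expnS; have := code_pos s; case: b => /=; lia. Qed.

Lemma code_inj : injective code.
Proof.
elim=> [|b1 s1 IH] [|b2 s2] //=.
- by have := code_pos s2; case: b2 => /=; lia.
- by have := code_pos s1; case: b1 => /=; lia.
move=> E; have [-> E2] : b1 = b2 /\ code s1 = code s2.
  by move: E; case: b1; case: b2 => /=; lia.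
by rewrite (IH _ E2).
Qed.

Lemma counting (T : finType) B (F : T -> seq bool) :
  injective F -> #|T| = expn 2 B -> exists x, B <= size (F x).
Proof.
move=> Finj cardT.
case: (boolP [exists x, B <= size (F x)]) => [/existsP [x Hx]|/existsPn H]; first by exists x.
exfalso.
have Hs : forall x, code (F x) - 1 < (expn 2 B).-1.
  move=> x; have := H x; rewrite -ltnNge => Hx.
  have := code_lt (F x); have := code_pos (F x).
  have : expn 2 (size (F x)).+1 <= expn 2 B by rewrite leq_pexp2l.
  lia.
pose f x : 'I_(expn 2 B).-1 := Ordinal (Hs x).
have finj : injective f.
  move=> x y /(congr1 val) /= E.
  apply: Finj; apply: code_inj; have := code_pos (F x); have := code_pos (F y); lia.
have := leq_card f finj; rewrite cardT card_ord.
have := expn_gt0 2 B; lia.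
Qed.

Lemma NN_bound n M : 0 < n -> 0 < M ->
  NN (minn n (Nat.sqrt (n * M))) n M <= 6 * n.
Proof.
move=> Hn HM.
set s0 := Nat.sqrt (n * M).
have [h1 _] := Nat.sqrt_spec (n * M) (Nat.le_0_l _).
have h1' : s0 * s0 <= n * M by rewrite /s0; lia.
set k := minn n s0.
have hk : k <= n by rewrite /k geq_minl.
have hks : k <= s0 by rewrite /k geq_minr.
rewrite /NN card_sum card_sum card_prod !card_ord.
have hq : hh k M * M <= 2 * k by rewrite /hh leq_trunc_div.
have hkk : k * hh k M * M <= 2 * n * M.
  have : k * k <= n * M by apply: leq_trans h1'; apply: leq_mul.
  rewrite -mulnA; nia.
have : k * hh k M <= 2 * n by rewrite -(leq_pmul2r HM).
lia.
Qed.

Lemma real_bound n M B : 0 < n -> 0 < M ->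
  minn n (Nat.sqrt (n * M)) * n <= B -> (/2 * lb_fun n M <= INR B)%R.
Proof.
move=> Hn HM HB.
set s0 := Nat.sqrt (n * M).
have [_ h2] := Nat.sqrt_spec (n * M) (Nat.le_0_l _).
have h2' : n * M < s0.+1 * s0.+1 by rewrite /s0; lia.
have s0pos : 0 < s0 by nia.
have HB' : (INR (minn n s0) * INR n <= INR B)%R.
  rewrite -mult_INR; apply: le_INR; apply/leP; exact: HB.
have Hlb1 : (lb_fun n M <= INR n * INR n)%R by rewrite /lb_fun; apply: Rmin_r.
have Hlb2 : (lb_fun n M <= INR n * sqrt (INR n * INR M))%R.
  rewrite /lb_fun sqrt_mult; try apply: pos_INR.
  apply: Rle_trans (Rmin_l _ _) _; right; ring.
have Hn0 : (0 <= INR n)%R by apply: pos_INR.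
have Hsq : (sqrt (INR n * INR M) <= 2 * INR s0)%R.
  have : (INR n * INR M <= INR s0.+1 * INR s0.+1)%R.
    rewrite -!mult_INR; apply: le_INR; apply/leP; lia.
  move/sqrt_le_1_alt; rewrite sqrt_square; last by apply: pos_INR.
  rewrite S_INR => H.
  have : (1 <= INR s0)%R by apply: (le_INR 1); apply/leP.
  lra.
case: (leqP n s0) => Hc.
  have E : minn n s0 = n by apply/minn_idPl.
  rewrite E in HB'; have : (0 <= INR n * INR n)%R by apply: Rmult_le_pos.
  lra.
have E : minn n s0 = s0 by apply/minn_idPr; apply: ltnW.
rewrite E in HB'.
have : (INR n * sqrt (INR n * INR M) <= INR n * (2 * INR s0))%R.
  by apply: Rmult_le_compat_l.
lra.
Qed.

Theorem theorem4 :
  exists (C : nat) (c : R) (n0 : nat), (0 < c)%R /\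
    forall n M : nat, (n0 <= n)%N -> (1 <= M)%N ->
    exists N : nat, (N <= C * n)%N /\
      forall (enc : wgraph N -> 'I_N -> seq bool)
             (query : seq bool -> 'I_N -> 'I_N * 'I_N -> option nat),
        is_SSDSO M enc query ->
        exists (G : wgraph N) (s : 'I_N),
          valid_graph M G /\ (c * lb_fun n M <= INR (size (enc G s)))%R.
Proof.
exists 6, (/2)%R, 1; split; first lra.
move=> n M Hn HM.
set k := minn n (Nat.sqrt (n * M)).
exists (NN k n M); split; first exact: NN_bound.
move=> enc query HQ.
pose s := enum_rank (vv k n M 0).
have Finj : injective (fun X : {ffun 'I_k * 'I_n -> bool} => enc (gr M X) s).
  move=> X Y /= E; apply/ffunP => -[i j].
  case EX: (X (i, j)); case EY: (Y (i, j)) => //; exfalso.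
  - exact: (sep HM HQ EX EY E).
  - exact: (sep HM HQ EY EX (esym E)).
have Hc : #|{: {ffun 'I_k * 'I_n -> bool}}| = expn 2 (k * n).
  by rewrite card_ffun card_bool card_prod !card_ord.
have [X HX] := counting Finj Hc.
exists (gr M X), s; split; first exact: valid_gr.
exact: real_bound.
Qed.
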